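(* Let $0<\varepsilon\le 0.1$, let $\Box$ be a closed axis-parallel square of side length $\varepsilon$, and let $R\subseteq\Box$ be any set. For any points $o\in\Box$ and $p\in R\oplus D$, the segment $\overline{op}$ is contained in $R\oplus D$, and moreover the relative interior of $\overline{op}$ is contained in the interior of $R\oplus D$.
   Context: $D$ is the closed unit disk centered at the origin and $\oplus$ denotes Minkowski sum. *)

(* Defs.v *)
(* points of the plane are pairs in R * R, R : realType.
   The topology on R * R is the product topology (= Euclidean topology). *)
From mathcomp Require Import all_boot all_order all_algebra.
From mathcomp Require Import all_classical all_reals all_analysis.
Set Implicit Arguments. Unset Strict Implicit. Unset Printing Implicit Defensive.
Import Order.TTheory GRing.Theory Num.Theory.
Import numFieldNormedType.Exports.
Local Open Scope classical_set_scope.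
Local Open Scope ring_scope.

Definition unit_disk (R : realType) : set (R * R) :=
  [set d | d.1 ^+ 2 + d.2 ^+ 2 <= 1].
Arguments unit_disk R : clear implicits.

Definition minkowski_sum (R : realType) (A B : set (R * R)) : set (R * R) :=
  [set p | exists a, exists b, [/\ A a, B b & p = (a.1 + b.1, a.2 + b.2)]].

Definition closed_square (R : realType) (x0 y0 s : R) : set (R * R) :=
  [set q | x0 <= q.1 <= x0 + s /\ y0 <= q.2 <= y0 + s].

Definition seg_pt (R : realType) (o p : R * R) (t : R) : R * R :=
  ((1 - t) * o.1 + t * p.1, (1 - t) * o.2 + t * p.2).

Definition segment (R : realType) (o p : R * R) : set (R * R) :=
  [set seg_pt o p t | t in `[0, 1]].

(* Relative interior of the segment [o, p]: the points with t in ]0, 1[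
   (this equals {o} when o = p, which is the relative interior of a point). *)
Definition open_segment (R : realType) (o p : R * R) : set (R * R) :=
  [set seg_pt o p t | t in `]0, 1[].

(* Main.v *)
Require Import Defs.
From mathcomp Require Import all_boot all_order all_algebra.
From mathcomp Require Import all_classical all_reals all_analysis.
From mathcomp Require Import ring lra.
Import Order.TTheory GRing.Theory Num.Theory.
Import numFieldNormedType.Exports.
Local Open Scope classical_set_scope.
Local Open Scope ring_scope.

Lemma interior_box (R : realType) (z : R*R) (A : set (R*R)) :
  (exists2 e : R, 0 < e & forall y, `|y.1 - z.1| < e -> `|y.2 - z.2| < e -> A y) ->
  interior A z.
Proof.
move=> [e e0 H]; rewrite /interior /=.
apply/nbhs_ballP; exists e => //= y [/= h1 h2].
by apply: H; rewrite distrC; [move: h1|move: h2]; rewrite /ball /=.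
Qed.

Lemma key (R : realType) (a1 a2 d1 d2 t : R) :
  0 <= t <= 1 ->
  ((1-t)*a1 + t*d1)^+2 + ((1-t)*a2 + t*d2)^+2 <=
  (1-t)*(a1^+2+a2^+2) + t*(d1^+2+d2^+2).
Proof.
move=> /andP[t0 t1].
have h : 0 <= t*(1-t)*((a1-d1)^+2+(a2-d2)^+2).
  apply: mulr_ge0; first by apply: mulr_ge0; lra.
  by apply: addr_ge0; apply: sqr_ge0.
suff -> : (1-t)*(a1^+2+a2^+2) + t*(d1^+2+d2^+2) =
  ((1-t)*a1 + t*d1)^+2 + ((1-t)*a2 + t*d2)^+2 + t*(1-t)*((a1-d1)^+2+(a2-d2)^+2).
  by rewrite lerDl.
ring.
Qed.

Theorem mainTheorem7 (R : realType) (eps x0 y0 : R) (Rset : set (R * R))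
    (o p : R * R) :
  0 < eps -> eps <= 1 / 10 ->
  Rset `<=` closed_square x0 y0 eps ->
  closed_square x0 y0 eps o ->
  minkowski_sum Rset (unit_disk R) p ->
  segment o p `<=` minkowski_sum Rset (unit_disk R) /\
  open_segment o p `<=` interior (minkowski_sum Rset (unit_disk R)).
Proof.
move=> e0 e1 sub [/andP[ox1 ox2] /andP[oy1 oy2]] [r [d [Rr Dd ->]]].
have [/andP[rx1 rx2] /andP[ry1 ry2]] := sub r Rr.
move: Dd; rewrite /unit_disk /= => Dd.
set a1 := o.1 - r.1; set a2 := o.2 - r.2.
have ha1 : a1 ^+ 2 <= 1/100.
  have : -eps <= a1 <= eps by rewrite /a1; apply/andP; split; lra.
  move=> /andP[h1 h2]; rewrite expr2; nra.
have ha2 : a2 ^+ 2 <= 1/100.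
  have : -eps <= a2 <= eps by rewrite /a2; apply/andP; split; lra.
  move=> /andP[h1 h2]; rewrite expr2; nra.
have bound (t : R) : 0 <= t <= 1 ->
  ((1-t)*a1 + t*d.1)^+2 + ((1-t)*a2 + t*d.2)^+2 <= (1-t)/50 + t.
  move=> ht; have K := @key R a1 a2 d.1 d.2 t ht.
  move: ht => /andP[t0 t1].
  have : (1-t)*(a1^+2+a2^+2) <= (1-t)*(1/50) by apply: ler_wpM2l; lra.
  have : t*(d.1^+2+d.2^+2) <= t*1 by apply: ler_wpM2l; lra.
  lra.
have segE (t : R) : seg_pt o (r.1 + d.1, r.2 + d.2) t =
    (r.1 + ((1-t)*a1 + t*d.1), r.2 + ((1-t)*a2 + t*d.2)).
  by rewrite /seg_pt /a1 /a2 /=; congr pair; ring.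
split.
  move=> _ [t /= /andP[t0 t1] <-]; rewrite segE; rewrite !bnd_simp in t0 t1.
  exists r; exists ((1-t)*a1 + t*d.1, (1-t)*a2 + t*d.2); split => //.
  rewrite /unit_disk /=; apply: (le_trans (bound t _)); first by rewrite t0.
  lra.
move=> _ [t /= /andP[t0 t1] <-]; rewrite segE; rewrite !bnd_simp in t0 t1.
set u1 := (1-t)*a1 + t*d.1; set u2 := (1-t)*a2 + t*d.2.
have hu : u1^+2 + u2^+2 <= (1-t)/50 + t by apply: bound; rewrite ltW // ltW.
set c := (1-t)/50 + t.
have c1 : c < 1 by rewrite /c; lra.
have c0 : 0 <= c by rewrite /c; lra.
have hu1 : u1^+2 <= 1 by have := sqr_ge0 u2; lra.
have hu2 : u2^+2 <= 1 by have := sqr_ge0 u1; lra.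
have au1 : `|u1| <= 1 by rewrite -(ler_pXn2r (n:=2)) ?nnegrE // real_normK ?num_real // expr1n.
have au2 : `|u2| <= 1 by rewrite -(ler_pXn2r (n:=2)) ?nnegrE // real_normK ?num_real // expr1n.
apply: interior_box; exists ((1 - c)/6); first lra.
move=> y h1 h2; exists r; exists (y.1 - r.1, y.2 - r.2); split => //; last first.
  by case: y h1 h2 => y1 y2 /= _ _; congr pair; ring.
rewrite /unit_disk /=.
set e1' := y.1 - (r.1 + u1) in h1; set e2' := y.2 - (r.2 + u2) in h2.
have -> : y.1 - r.1 = u1 + e1' by rewrite /e1'; ring.
have -> : y.2 - r.2 = u2 + e2' by rewrite /e2'; ring.
have b1 : (u1 + e1')^+2 <= u1^+2 + 3 * ((1-c)/6).
  have : `|e1'| <= 1.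
  lra.
  have : 2 * `|u1 * e1'| <= 2 * ((1-c)/6).
    rewrite normrM; apply: ler_wpM2l => //; rewrite -[_/6]mul1r.
    apply: ler_pM => //; lra.
  have : `|e1'|^+2 <= (1-c)/6.
    rewrite expr2; rewrite -[_/6]mul1r; apply: ler_pM => //; lra.
  rewrite real_normK ?num_real //.
  have := ler_norm (u1 * e1').
  have -> : (u1+e1')^+2 = u1^+2 + 2*(u1*e1') + e1'^+2 by ring.
  lra.
have b2 : (u2 + e2')^+2 <= u2^+2 + 3 * ((1-c)/6).
  have : `|e2'| <= 1 by lra.
  have : 2 * `|u2 * e2'| <= 2 * ((1-c)/6).
    rewrite normrM; apply: ler_wpM2l => //; rewrite -[_/6]mul1r.
    apply: ler_pM => //; lra.
  have : `|e2'|^+2 <= (1-c)/6.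
    rewrite expr2; rewrite -[_/6]mul1r; apply: ler_pM => //; lra.
  rewrite real_normK ?num_real //.
  have := ler_norm (u2 * e2').
  have -> : (u2+e2')^+2 = u2^+2 + 2*(u2*e2') + e2'^+2 by ring.
  lra.
have hc : u1^+2 + u2^+2 <= c by [].
apply: (le_trans (lerD b1 b2)).
rewrite addrACA -mulrDr.
apply: (le_trans (lerD hc (lexx _))).
have -> : 3 * ((1 - c) / 6 + (1 - c) / 6) = 1 - c :> R by field.
by rewrite addrCA subrr addr0.
Qed.
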